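(* Let $s\ge2$ and let $G$ be a $K_{2,s}$-free graph. Then $G$ is strongly $d$-degenerate, where $d=d(G):=\lfloor 2s\,\nabla_1(G)\rfloor$.
   Context: A graph $H$ is a shallow minor of $G$ at depth $r$ (integer $r\ge0$) if there are disjoint sets $V_1,\dots,V_p\subseteq V(G)$ such that each $G[V_i]$ contains a vertex $x_i$ with every vertex of $V_i$ at distance at most $r$ from $x_i$ in $G[V_i]$, and $H$ is (isomorphic to) a subgraph of the graph obtained by contracting each $V_i$ to a single vertex (two contracted vertices adjacent iff some edge joins the corresponding sets). $\nabla_r(G)$ is the maximum of $e(H)/v(H)$ over all non-empty shallow minors $H$ of $G$ at depth $r$. A graph is $K_{2,s}$-free if it has no subgraph isomorphic to $K_{2,s}$. For an integer $d\ge1$, a vertex $v$ of $G$ is $d$-removable in $G$ if $d_G(v)\le d$ and at most one neighbour $w$ of $v$ has $d_G(w)>d$; $G$ is strongly $d$-degenerate if every non-empty subgraph $G'$ of $G$ contains a vertex $d$-removable in $G'$. *)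

(* Defs.v *)
From HB Require Import structures.
From mathcomp Require Import all_boot all_order all_algebra.
Set Implicit Arguments. Unset Strict Implicit. Unset Printing Implicit Defensive.
Import Order.TTheory GRing.Theory Num.Theory.

Definition simple_graph (T : finType) (e : rel T) : Prop :=
  symmetric e /\ irreflexive e.

Definition nverts (T : finType) : nat := #|T|.
Definition edge_set (T : finType) (e : rel T) : {set {set T}} :=
  [set E : {set T} | [exists u, exists v, e u v && (E == [set u; v])]].
Definition nedges (T : finType) (e : rel T) : nat := #|edge_set e|.

Fixpoint reach_in (T : finType) (e : rel T) (V : {set T}) (k : nat) (x y : T)
  : bool :=
  match k with
  | 0 => (x == y)
  | k'.+1 => (x == y) || [exists z in V, e x z && reach_in e V k' z y]
  end.

Definition radius_le (T : finType) (e : rel T) (V : {set T}) (x : T) (r : nat)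
  : bool :=
  (x \in V) && [forall y in V, reach_in e V r x y].

(* H = (TH, eH) is (isomorphic to) a subgraph of a depth-r contraction of
   G = (T, e): the vertex u of H is mapped to the branch set branch u
   (so distinct vertices of H go to distinct, disjoint branch sets), and
   every edge of H is realised by an edge of G between the branch sets. *)
Definition shallow_minor (r : nat) (T : finType) (e : rel T)
    (TH : finType) (eH : rel TH) : Prop :=
  simple_graph eH /\
  exists branch : TH -> {set T},
    (forall u v, u != v -> [disjoint branch u & branch v]) /\
    (forall u, exists x, radius_le e (branch u) x r) /\
    (forall u v, eH u v ->
       exists x y, [/\ x \in branch u, y \in branch v & e x y]).

Definition is_nabla (r : nat) (T : finType) (e : rel T) (q : rat) : Prop :=
  (exists (TH : finType) (eH : rel TH),
      [/\ shallow_minor r e eH, 0 < #|TH|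
        & q = ((nedges eH)%:R / (nverts TH)%:R)%R]) /\
  (forall (TH : finType) (eH : rel TH),
      shallow_minor r e eH -> (0 < #|TH|)%N ->
      ((nedges eH)%:R / (nverts TH)%:R <= q)%R).

Definition has_K2s (s : nat) (T : finType) (e : rel T) : Prop :=
  exists (a b : T) (B : {set T}),
    [/\ a != b, a \notin B, b \notin B, #|B| = s
      & forall w, w \in B -> e a w /\ e b w].

Definition K2s_free (s : nat) (T : finType) (e : rel T) : Prop :=
  ~ has_K2s s e.

Definition subgraph (T : finType) (e : rel T) (S : {set T}) (e' : rel T)
  : Prop :=
  symmetric e' /\
  (forall x y, e' x y -> [&& e x y, x \in S & y \in S]).

Definition deg_in (T : finType) (S : {set T}) (e' : rel T) (v : T) : nat :=
  #|[set w in S | e' v w]|.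

Definition removable (d : nat) (T : finType) (S : {set T}) (e' : rel T)
    (v : T) : bool :=
  [&& v \in S, deg_in S e' v <= d &
      #|[set w in S | e' v w && (d < deg_in S e' w)]| <= 1].

Definition strongly_degenerate (d : nat) (T : finType) (e : rel T) : Prop :=
  forall (S : {set T}) (e' : rel T), subgraph e S e' -> S != set0 ->
    exists v, removable d S e' v.

(* Main.v *)
Require Import Defs.
From HB Require Import structures.
From mathcomp Require Import all_boot all_order all_algebra.
From mathcomp Require Import zify ring lra.
Import Order.TTheory GRing.Theory Num.Theory.

Lemma sub_of_card (T : finType) (A : {set T}) k :
  k <= #|A| -> exists B : {set T}, B \subset A /\ #|B| = k.
Proof.
elim: k => [|k IH] Hk; first by exists set0; rewrite sub0set cards0.
have [B [BA cB]] := IH (ltnW Hk).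
have : 0 < #|A :\: B| by rewrite cardsDS // cB subn_gt0.
case/card_gt0P => z; rewrite inE => /andP [zB zA].
exists (z |: B); split; first by rewrite subUset sub1set zA BA.
by rewrite cardsU1 zB cB.
Qed.

Lemma sum_card (T : finType) (P : pred T) :
  \sum_x (P x : nat) = #|[set x | P x]|.
Proof.
rewrite -sum1_card [RHS]big_mkcond /=; apply: eq_bigr => x _.
by rewrite inE; case: (P x).
Qed.

Lemma set2_eq (T : finType) (a b c d : T) :
  a != b -> [set a; b] = [set c; d] -> (a = c /\ b = d) \/ (a = d /\ b = c).
Proof.
move=> ab E.
have ha : a \in [set c; d] by rewrite -E !inE eqxx.
have hb : b \in [set c; d] by rewrite -E !inE eqxx orbT.
move: ha hb; rewrite !inE => /orP [/eqP ac|/eqP ad] /orP [/eqP bc|/eqP bd].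
- by move: ab; rewrite ac bc eqxx.
- by left.
- by right.
- by move: ab; rewrite ad bd eqxx.
Qed.

Arguments set2_eq {T a b c d}.
Lemma ord_edges (TH : finType) (eH : rel TH) :
  simple_graph eH ->
  \sum_u \sum_v (eH u v : nat) <= 2 * nedges eH.
Proof.
move=> [hsym hirr].
rewrite pair_big /=.
have -> : \sum_(p : TH * TH | true && true) (eH p.1 p.2 : nat)
          = \sum_(p : TH * TH | eH p.1 p.2) 1.
  by rewrite [RHS]big_mkcond; apply: eq_bigr => p _; case: (eH _ _).
rewrite (partition_big (fun p : TH * TH => [set p.1; p.2]) (mem (edge_set eH))) /=;
  last first.
  move=> [u v] /= huv; rewrite inE; apply/existsP; exists u; apply/existsP; exists v.
  by rewrite huv eqxx.
rewrite mulnC -sum_nat_const /nedges; apply: leq_sum => E _.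
case: (pickP (fun p : TH * TH => eH p.1 p.2 && ([set p.1; p.2] == E))) => [p0 /andP [h0 /eqP E0]|none]; last first.
  by rewrite big_pred0.
rewrite sum1_card.
apply: (leq_trans (subset_leq_card (B := [set p0; (p0.2, p0.1)]) _)).
  apply/subsetP => p; rewrite inE => /andP [hp /eqP Ep].
  have pne : p.1 != p.2 by apply/eqP => ee; move: hp; rewrite ee hirr.
  case: (set2_eq pne (etrans Ep (esym E0))) => [[e1 e2]|[e1 e2]]; rewrite !inE.
    by case: p e1 e2 {hp Ep pne} => a b /= -> ->; case: p0 {h0 E0} => //= *; rewrite eqxx.
  by case: p e1 e2 {hp Ep pne} => a b /= -> ->; case: p0 {h0 E0} => //= *; rewrite eqxx orbT.
by rewrite cards2 ltnS leq_b1.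
Qed.

Theorem proposition3p2 (s : nat) (T : finType) (e : rel T) (q : rat) :
  (2 <= s)%N -> simple_graph e -> K2s_free s e -> is_nabla 1 e q ->
  strongly_degenerate `|Num.floor ((2 * s)%:R * q)%R|%N e.
Proof.
move=> s2 [esym eirr] K2 [[TH0 [eH0 [_ TH0pos q0]]] nab].
set d := `|Num.floor _|%N.
move=> S e' [e'sym e'sub] Sne.
case: (boolP [exists v, removable d S e' v]) => [/existsP//|/existsPn nrem].
exfalso.
have e'S x y : e' x y -> y \in S by move/e'sub/and3P=> [].
have e'e x y : e' x y -> e x y by move/e'sub/and3P=> [].
have e'irr x : e' x x = false by apply/negbTE/negP => /e'e; rewrite eirr.
pose deg := deg_in S e'.
pose H := [set x in S | d < deg x].
pose L := [set x in S | deg x <= d].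
pose nb v := [set w in S | e' v w && (d < deg w)].
have nb2 v : v \in L -> 1 < #|nb v|.
  rewrite inE => /andP [vS vd]; move: (nrem v).
  by rewrite /removable vS vd /= -ltnNge.
pose f v := odflt v [pick w in nb v].
have fP v : v \in L -> f v \in nb v.
  move=> vL; rewrite /f; case: pickP => [w //|none] /=.
  have : 0 < #|nb v| by apply: ltnW; apply: nb2.
  by case/card_gt0P => w hw; rewrite none in hw.
have fH v : v \in L -> f v \in H.
  by move/fP; rewrite !inE => /andP [-> /andP [_ ->]].
have fe v : v \in L -> e' v (f v).
  by move/fP; rewrite !inE => /andP [_ /andP [-> _]].
have HL y : y \in S -> (y \in H) = (y \notin L).
  by move=> yS; rewrite !inE yS /= -ltnNge.
have Hne : 0 < #|H|.
  case: (set_0Vmem S) => [S0|[v vS]]; first by rewrite S0 eqxx in Sne.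
  case: (boolP (v \in H)) => [vH|]; first by apply/card_gt0P; exists v.
  rewrite HL // negbK => vL.
  by apply/card_gt0P; exists (f v); apply: fH.
have degE x : deg x = \sum_y (e' x y : nat).
  rewrite sum_card /deg /deg_in; apply: eq_card => w; rewrite !inE.
  by case h: (e' x w); rewrite ?andbF ?andbT ?(e'S _ _ h).
pose a x y := ((x \in H) && e' x y && (y \in H) : nat).
pose c x y := \sum_v ((v \in L) && (f v == x) && (e' v y && (y \in H) && (y != x)) : nat).
pose F x y := [&& x \in H, y \in H, x != y &
   e' x y || [exists v, (v \in L) && ((f v == x) && e' v y || (f v == y) && e' v x)]].
have stepA : #|H| * d.+1 <= \sum_(x in H) deg x.
  by rewrite -sum_nat_const; apply: leq_sum => x; rewrite inE => /andP [_ ->].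
have stepB : \sum_(x in H) deg x = \sum_x \sum_y a x y + \sum_(v in L) #|nb v|.
  have -> : \sum_(x in H) deg x = \sum_(x in H) \sum_y
       ((e' x y && (y \in H) : nat) + (e' x y && (y \in L) : nat)).
    apply: eq_bigr => x _; rewrite degE; apply: eq_bigr => y _.
    case h: (e' x y) => //=; rewrite HL ?(e'S _ _ h) //.
    by case: (y \in L).
  under eq_bigr => x _ do rewrite big_split.
  rewrite big_split /=; congr (_ + _).
    rewrite [RHS](bigID (fun x => x \in H)) /= [X in _ = _ + X]big1 ?addn0.
      by apply: eq_bigr => x xH; apply: eq_bigr => y _; rewrite /a xH.
    by move=> x /negbTE xH; apply: big1 => y _; rewrite /a xH.
  rewrite exchange_big /= [LHS](bigID (fun x => x \in L)) /= [X in _ + X = _]big1 ?addn0.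
    apply: eq_bigr => v vL; rewrite /nb -sum_card [LHS]big_mkcond /=.
    apply: eq_bigr => x _; rewrite e'sym vL andbT.
    have -> : [&& x \in S, e' v x & d < deg x] = (x \in H) && e' v x.
      by rewrite !inE andbA andbAC.
    by case: (x \in H).
  by move=> v /negbTE vL; apply: big1 => x _; rewrite vL andbF.
have nbD v : v \in L -> #|nb v| = (\sum_y (e' v y && (y \in H) && (y != f v) : nat)).+1.
  move=> vL; rewrite (cardsD1 (f v)) fP // sum_card add1n; congr (_.+1).
  apply: eq_card => y; rewrite !inE.
  by case: (y == f v); case: (y \in S); case: (e' v y); case: (d < deg y).
have stepC : \sum_(v in L) #|nb v| <= 2 * \sum_x \sum_y c x y.
  have -> : \sum_x \sum_y c x y =
      \sum_(v in L) \sum_y (e' v y && (y \in H) && (y != f v) : nat).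
    rewrite /c.
    under eq_bigr => x _ do rewrite exchange_big /=.
    rewrite exchange_big /=.
    under eq_bigr => v _ do rewrite exchange_big /=.
    rewrite [RHS]big_mkcond /=; apply: eq_bigr => v _.
    case vL: (v \in L); last by rewrite big1 // => y _; rewrite big1.
    apply: eq_bigr => y _.
    rewrite (bigD1 (f v)) //= eqxx big1 ?addn0 // => x /negbTE.
    by rewrite eq_sym => ->.
  rewrite big_distrr /=; apply: leq_sum => v vL.
  have := nb2 v vL; rewrite (nbD v vL); lia.
have Fa x y : (x \in H) && e' x y && (y \in H) -> F x y.
  move=> /andP [/andP [xH exy] yH]; rewrite /F xH yH exy /= andbT.
  by apply/eqP => exy'; move: exy; rewrite exy' e'irr.
have Fc1 x y v : (v \in L) && (f v == x) && (e' v y && (y \in H) && (y != x)) -> F x y.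
  move=> /andP [/andP [vL /eqP fx] /andP [/andP [evy yH] yx]].
  rewrite /F yH -fx fH //= fx eq_sym yx /=; apply/orP; right.
  by apply/existsP; exists v; rewrite vL fx eqxx evy.
have Fsym x y : F x y = F y x.
  rewrite /F [x == y]eq_sym [e' x y]e'sym; case: (x \in H); case: (y \in H) => //=.
  congr (_ && (_ || _)); apply/existsP/existsP => -[v hv]; exists v;
  by move: hv; rewrite orbC.
have K2b x y : x != y -> #|[set v | e' v x && e' v y]| <= s.-1.
  move=> xy; rewrite leqNgt; apply/negP => hc; apply: K2.
  have [B [BA cB]] := @sub_of_card _ [set v | e' v x && e' v y] s (ltac:(lia)).
  exists x, y, B; split => //.
  - by apply/negP => /(subsetP BA); rewrite inE e'irr.
  - by apply/negP => /(subsetP BA); rewrite inE e'irr andbF.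
  by move=> w /(subsetP BA); rewrite inE => /andP [/e'e h1 /e'e h2]; rewrite !(esym _ w).
have stepE x y : a x y + (c x y + c y x) <= s * F x y.
  case Fxy: (F x y); last first.
    have -> : a x y = 0.
      rewrite /a; case: (boolP ((x \in H) && e' x y && (y \in H))) => [/Fa|//].
      by rewrite Fxy.
    have -> : c x y = 0.
      by rewrite /c big1 // => v _; apply/eqP; rewrite eqb0; apply/negP => /Fc1; rewrite Fxy.
    have -> : c y x = 0.
      by rewrite /c big1 // => v _; apply/eqP; rewrite eqb0; apply/negP => /Fc1; rewrite Fsym Fxy.
    by [].
  have xy : x != y by move: Fxy; rewrite /F => /and4P [].
  have hc : c x y + c y x <= #|[set v | e' v x && e' v y]|.
    rewrite /c -big_split -sum_card /=; apply: leq_sum => v _.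
    case vL: (v \in L) => //=.
    have fe' := fe v vL.
    case fx: (f v == x); case fy: (f v == y) => /=.
    - by move: xy; rewrite -(eqP fx) -(eqP fy) eqxx.
    - rewrite (eqP fx) in fe'; rewrite fe' /=.
      by case: (e' v y); case: (y \in H); case: (y != x).
    - rewrite (eqP fy) in fe'; rewrite fe' /= andbT.
      by case: (e' v x); case: (x \in H); case: (x != y).
    - by [].
  have ha : a x y <= 1 by rewrite /a; case: (_ && _).
  have := K2b x y xy; lia.
have stepN : #|H| * d.+1 <= s * \sum_x \sum_y (F x y : nat).
  apply: (leq_trans stepA); rewrite stepB.
  apply: (leq_trans (leq_add (leqnn _) stepC)).
  have -> : 2 * \sum_x \sum_y c x y = \sum_x \sum_y (c x y + c y x).
    rewrite mul2n -addnn {2}exchange_big /= -big_split /=.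
    by apply: eq_bigr => x _; rewrite big_split.
  rewrite -big_split /= big_distrr /=; apply: leq_sum => x _.
  rewrite -big_split /= big_distrr /=; apply: leq_sum => y _.
  exact: stepE.
pose TH := {x : T | x \in H}.
pose eH (u w : TH) := F (val u) (val w).
have bs (g : T -> nat) : \sum_(x in H) g x = \sum_(u : TH) g (val u).
  exact: (big_sub H g).
have sumTH : \sum_x \sum_y (F x y : nat) = \sum_(u : TH) \sum_(w : TH) (eH u w : nat).
  rewrite -(bs (fun x => \sum_(w : TH) (F x (val w) : nat))) /=.
  rewrite (bigID (fun x => x \in H)) /= [X in _ + X]big1 ?addn0; last first.
    by move=> x /negbTE xH; apply: big1 => y _; rewrite /F xH.
  apply: eq_bigr => x xH; rewrite -(bs (fun y => F x y)) /=.
  rewrite (bigID (fun x => x \in H)) /= [X in _ + X]big1 ?addn0 //.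
  by move=> y /negbTE yH; rewrite /F yH andbF.
have HnL z : z \in H -> z \notin L.
  by move=> zH; move: (zH); rewrite inE => /andP [zS _]; rewrite -HL.
have sg : simple_graph eH.
  split; first by move=> u w; exact: Fsym.
  by move=> u; rewrite /eH /F eqxx /= !andbF.
have minor : shallow_minor 1 e eH.
  split=> //; exists (fun u => val u |: [set v in L | f v == val u]).
  split; [|split].
  - move=> u w uw; rewrite -setI_eq0; apply/eqP/setP => z; rewrite !inE.
    have vuw : val u != val w by rewrite (inj_eq val_inj).
    apply/negP => /andP [h1 h2]; move: vuw.
    case/orP: h1 => [/eqP zu|/andP [zL /eqP fu]]; case/orP: h2 => [/eqP zw|/andP [zL' /eqP fw]].
    + by rewrite -zu -zw eqxx.
    + by move: (HnL _ (valP u)); rewrite -zu inE zL'.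
    + by move: (HnL _ (valP w)); rewrite -zw inE zL.
    + by rewrite -fu -fw eqxx.
  - move=> u; exists (val u); rewrite /radius_le /= !inE eqxx /=.
    apply/forallP => y; apply/implyP; rewrite !inE => /orP [/eqP ->|/andP [yL /eqP fy]]; first by rewrite eqxx.
    apply/orP; right; apply/existsP; exists y; rewrite !inE yL fy !eqxx orbT /= andbT.
    by rewrite esym -fy; apply: e'e; apply: fe; rewrite inE.
  - move=> u w; rewrite /eH /F => /and4P [uH wH uw /orP [exy|/existsP [v /andP [vL /orP [/andP [/eqP fu evw]|/andP [/eqP fw evu]]]]]].
    + by exists (val u), (val w); rewrite !inE !eqxx; split => //; apply: e'e.
    + by exists v, (val w); rewrite inE in vL; rewrite !inE !eqxx vL fu eqxx orbT; split => //; apply: e'e.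
    + by exists (val u), v; rewrite inE in vL; rewrite !inE !eqxx vL fw eqxx orbT; split => //; rewrite esym; apply: e'e.
have cTH : #|{: TH}| = #|H| by rewrite card_sig; apply: eq_card.
have THpos : 0 < #|{: TH}| by rewrite cTH.
have N1 : #|H| * d.+1 <= s * (2 * nedges eH).
  apply: (leq_trans stepN); rewrite sumTH leq_mul2l; apply/orP; right.
  exact: ord_edges.
have R2 := nab TH eH minor THpos.
rewrite /nverts cTH ler_pdivrMr ?ltr0n // in R2.
have qge0 : (0 <= q)%R by rewrite q0 divr_ge0 ?ler0n.
have dE : ((d%:R : rat) = (Num.floor ((2 * s)%:R * q))%:~R)%R.
  by rewrite natr_absz ger0_norm // floor_ge0 mulr_ge0 ?ler0n.
have R3 := floorD1_gt ((2 * s)%:R * q).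
rewrite intrD -dE in R3.
move: N1; rewrite -(ler_nat rat) !natrM -addn1 natrD => R1.
have hpos : (0 < (#|H|)%:R :> rat)%R by rewrite ltr0n.
rewrite natrM (_ : 1%:~R = 1)%R // in R3.
have A1 := ler_wpM2l (ler0n _ s) (ler_wpM2l (ler0n _ 2) R2).
have A2 : ((2%:R * s%:R * q) * #|H|%:R < (d%:R + 1) * #|H|%:R :> rat)%R.
  by rewrite ltr_pM2r.
lra.
Qed.
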